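(* If a selection $\mathtt{SEL}$ of the consistent set map is $(\gamma,T)$-weakly competitive, then it is $(k\gamma,kT)$-weakly competitive for every $k\in\mathbb{N}$.
   Context: $(\mathbb{T},\mathsf{K},d)$ is a compact parametrization of a set $\mathcal{F}$ of functions $\mathbb{N}\times\mathcal{X}\times\mathcal{U}\to\mathcal{X}$. For a finite data set $\mathcal{D}$ of points $(t,x^+,x,u)$, $\mathsf{P}(\mathcal{D})$ is the closure of $\{\theta\in\mathsf{K}:\exists f\in\mathbb{T}[\theta],\ x^+=f(t,x,u)\ \forall(t,x^+,x,u)\in\mathcal{D}\}$; $\mathtt{SEL}$ is a selection if $\mathtt{SEL}[\mathcal{D}]\in\mathsf{P}(\mathcal{D})$. $\mathtt{SEL}$ is $(\gamma,T)$-weakly competitive if for every data stream $\mathcal{D}_t=(d_1,\dots,d_t)$ with some $f\in\mathcal{F}$ consistent with all $\mathcal{D}_t$, $\theta_t=\mathtt{SEL}[\mathcal{D}_t]$ satisfies $\sum_{t=t_1+1}^{t_2}d(\theta_t,\theta_{t-1})\le\gamma d_H(\mathsf{P}(\mathcal{D}_{t_2}),\mathsf{P}(\mathcal{D}_{t_1}))$ whenever $t_2-t_1\le T$; $d_H$ is the Hausdorff distance. *)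

(* Defs.v *)
From mathcomp Require Import all_boot all_order all_algebra.
From mathcomp Require Import all_classical all_reals ereal.
Set Implicit Arguments. Unset Strict Implicit. Unset Printing Implicit Defensive.
Import Order.TTheory GRing.Theory Num.Theory.
Local Open Scope classical_set_scope.
Local Open Scope ring_scope.

(* A data point (t, x^+, x, u). *)
Definition datum (X U : Type) := (nat * X * X * U)%type.

Section Defs.
Variables (R : realType) (X U Theta : Type).
Variables (K : set Theta) (d : Theta -> Theta -> R)
          (Tm : Theta -> set (nat -> X -> U -> X)).

Definition is_metric_on : Prop :=
  [/\ forall x y, K x -> K y -> 0 <= d x y,
      forall x y, K x -> K y -> (d x y = 0 <-> x = y),
      forall x y, K x -> K y -> d x y = d y x &
      forall x y z, K x -> K y -> K z -> d x z <= d x y + d y z].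

Definition metric_compact : Prop :=
  forall u : nat -> Theta, (forall n, K (u n)) ->
  exists (phi : nat -> nat) (l : Theta),
    [/\ K l, (forall n m, (n < m)%N -> (phi n < phi m)%N) &
        forall e, 0 < e -> exists N, forall n, (N <= n)%N -> d (u (phi n)) l < e].

Definition compact_parametrization (F : set (nat -> X -> U -> X)) : Prop :=
  [/\ is_metric_on, metric_compact & F = \bigcup_(th in K) Tm th].

Definition consistent (f : nat -> X -> U -> X) (D : set (datum X U)) : Prop :=
  forall t xp x u, D (t, xp, x, u) -> xp = f t x u.

Definition closure_in (S : set Theta) : set Theta :=
  [set th | K th /\ forall e, 0 < e -> exists th', S th' /\ d th th' < e].

Definition Pset (D : set (datum X U)) : set Theta :=
  closure_in [set th | K th /\ exists f, Tm th f /\ consistent f D].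

Definition is_selection (SEL : set (datum X U) -> Theta) : Prop :=
  forall D, finite_set D -> Pset D !=set0 -> Pset D (SEL D).

Definition edist_set (x : Theta) (B : set Theta) : \bar R :=
  ereal_inf [set (d x b)%:E | b in B].
Definition hausdorff (A B : set Theta) : \bar R :=
  Order.max (ereal_sup [set edist_set a B | a in A])
            (ereal_sup [set edist_set b A | b in B]).

(* D_t = {d_1, ..., d_t}, where the stream is w with d_(i+1) = w i *)
Definition prefix (w : nat -> datum X U) (t : nat) : set (datum X U) :=
  [set w i | i in [set i | (i < t)%N]].

Definition weakly_competitive (F : set (nat -> X -> U -> X)) (gamma : R)
    (T : nat) (SEL : set (datum X U) -> Theta) : Prop :=
  forall w : nat -> datum X U,
    (exists f, F f /\ forall t, consistent f (prefix w t)) ->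
    forall t1 t2 : nat, (t1 <= t2)%N -> (t2 - t1 <= T)%N ->
    ((\sum_(t1.+1 <= t < t2.+1)
        d (SEL (prefix w t)) (SEL (prefix w t.-1)))%:E
     <= gamma%:E * hausdorff (Pset (prefix w t2)) (Pset (prefix w t1)))%E.

End Defs.

(* Main.v *)
Require Import Defs.
From mathcomp Require Import all_boot all_order all_algebra.
From mathcomp Require Import all_classical all_reals ereal.
From mathcomp Require Import zify.
From Stdlib Require Import Lia.
Import Order.TTheory GRing.Theory Num.Theory.
Local Open Scope classical_set_scope.
Local Open Scope ring_scope.

Section Helpers.
Variables (R : realType) (Theta : Type) (K : set Theta) (d : Theta -> Theta -> R).
Hypothesis dge0 : forall x y, K x -> K y -> 0 <= d x y.
Hypothesis d0 : forall x, K x -> d x x = 0.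

Lemma edist_le0 (x : Theta) (B : set Theta) : K x -> B x ->
  (edist_set d x B <= 0)%E.
Proof.
move=> Kx Bx; rewrite /edist_set.
apply: (@le_trans _ _ ((d x x)%:E)).
  by apply: ereal_inf_lbound; exists x.
by rewrite d0.
Qed.

Lemma edist_ge0 (x : Theta) (B : set Theta) : K x -> B `<=` K ->
  (0 <= edist_set d x B)%E.
Proof.
move=> Kx BK; rewrite /edist_set; apply: le_ereal_inf_tmp.
move=> _ [b Bb <-]; rewrite lee_fin; exact: dge0 (BK _ Bb).
Qed.

Lemma haus_mono (A A' B B' : set Theta) :
  A `<=` K -> A' `<=` A -> B `<=` B' -> B' `<=` A' -> B `<=` A ->
  B !=set0 ->
  (hausdorff d B' A' <= hausdorff d B A)%E /\ (0 <= hausdorff d B A)%E.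
Proof.
move=> AK A'A BB' B'A' BA [b0 Bb0].
have y0ge0 : (0 <= ereal_sup [set edist_set d a B | a in A])%E.
  apply: le_trans (ereal_sup_ubound _). 2: by exists b0; [exact: BA|].
  apply: edist_ge0; first exact: AK (BA _ Bb0).
  by move=> x /BA /AK.
have y0le : (ereal_sup [set edist_set d a B | a in A] <= hausdorff d B A)%E.
  by rewrite /hausdorff le_max lexx orbT.
split; last exact: le_trans y0le.
rewrite /hausdorff ge_max; apply/andP; split.
- apply: le_trans y0le; apply: le_trans y0ge0.
  apply: ge_ereal_sup => _ [b Bb <-].
  apply: edist_le0; last exact: B'A'.
  exact: AK (A'A _ (B'A' _ Bb)).
- apply: le_trans y0le; apply: ge_ereal_sup => _ [a A'a <-].
  apply: le_trans (ereal_sup_ubound _); last by exists a; [exact: A'A|].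
  rewrite /edist_set; apply: le_ereal_inf => _ [b Bb <-].
  by exists b => //; exact: BB'.
Qed.
End Helpers.

Theorem corollary4 (R : realType) (X U Theta : Type)
    (K : set Theta) (d : Theta -> Theta -> R)
    (Tm : Theta -> set (nat -> X -> U -> X))
    (F : set (nat -> X -> U -> X))
    (SEL : set (datum X U) -> Theta) (gamma : R) (T : nat) :
  compact_parametrization K d Tm F ->
  is_selection K d Tm SEL ->
  0 <= gamma ->
  weakly_competitive K d Tm F gamma T SEL ->
  forall k : nat, weakly_competitive K d Tm F (k%:R * gamma) (k * T) SEL.
Proof.
move=> [[dge0 dE dsym dtri] _ FE] _ g0 Hw k w Hf.
have d0 : forall x, K x -> d x x = 0 by move=> x Kx; apply/(dE x x Kx Kx).
have PK : forall t, Pset K d Tm (Defs.prefix w t) `<=` K by move=> t x [].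
have Pmono : forall s t, (s <= t)%N ->
    Pset K d Tm (Defs.prefix w t) `<=` Pset K d Tm (Defs.prefix w s).
  move=> s t st x [Kx Hx]; split => // e e0.
  have [y [[Ky [f [Tf cf]]] dy]] := Hx e e0.
  exists y; split => //; split => //; exists f; split => //.
  move=> a b c u [i /= ils wi]; apply: (cf a b c u).
  by exists i => //=; apply: leq_trans st.
have Pne : forall t, Pset K d Tm (Defs.prefix w t) !=set0.
  case: Hf => f [Ff cf]; rewrite FE in Ff; case: Ff => th Kth Tth.
  move=> t; exists th; split => // e e0; exists th; split.
    by split => //; exists f.
  by rewrite d0.
have Hgen := Hw w Hf.
elim: k => [|k IH] t1 t2 t12 tT.
  have -> : t2 = t1 by apply/eqP; rewrite eqn_leq t12 andbT -subn_eq0 -leqn0.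
  rewrite big_geq // mul0r mul0e; exact: lexx.
set s := minn t2 (t1 + k * T).
have t1s : (t1 <= s)%N by rewrite leq_min t12 leq_addr.
have st2 : (s <= t2)%N by rewrite geq_minl.
have H1 := IH t1 s t1s.
have H2 := Hgen s t2 st2.
have [Ha Hpos] := @haus_mono R Theta K d dge0 d0 _ _ _ _ (PK t1) (Pmono _ _ t1s)
   (Pmono _ _ (leqnn t2)) (Pmono _ _ st2) (Pmono _ _ t12) (Pne t2).
have [Hb _] := @haus_mono R Theta K d dge0 d0 _ _ _ _ (PK t1) (Pmono _ _ (leqnn t1))
   (Pmono _ _ st2) (Pmono _ _ t1s) (Pmono _ _ t12) (Pne t2).
rewrite (@big_cat_nat _ _ _ s.+1) //= EFinD.
rewrite -natr1 mulrDl mul1r EFinD ge0_muleDl; last 2 first.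
- by rewrite lee_fin mulr_ge0.
- by rewrite lee_fin.
apply: leeD.
- apply: le_trans (H1 _) _.
  + rewrite /s; move: tT; rewrite mulSn; move: (k * T)%N => m; clear -m; lia.
  + apply: lee_wpmul2l; first by rewrite lee_fin mulr_ge0.
    exact: Hb.
- apply: le_trans (H2 _) _.
  + rewrite /s; move: tT; rewrite mulSn; move: (k * T)%N => m; clear -m; lia.
  + by apply: lee_wpmul2l; [rewrite lee_fin|].
Qed.
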